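(* If $k \geq 9$ and $|q - q_k| \leq q_k^{-2k-6}$, then there exists a sequence $(c_j)_{j\ge1} \in 1^k0^{k+4}W_2^\mathbb{N}$ such that $\sum_{j\ge1} c_j q^{-j} = 1$.
   Context: $q_k$ is the unique root in $(1,2)$ of $x^k - x^{k-1} - \cdots - x - 1 = 0$. $W_2 = \{(-1\,0), (0\,{-1}), (00), (01), (10)\}$ is a set of words of length 2 over $\{-1,0,1\}$, and $W_2^\mathbb{N}$ is the set of infinite concatenations of elements of $W_2$. $1^k0^{k+4}W_2^\mathbb{N}$ is the set of sequences in $\{-1,0,1\}^\mathbb{N}$ whose first $2k+4$ entries are $k$ ones followed by $k+4$ zeros and whose tail from index $2k+5$ lies in $W_2^\mathbb{N}$. *)

(* Defs.v *)
From Stdlib Require Import Reals ZArith.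
Open Scope R_scope.

Definition is_qk (k : nat) (x : R) : Prop :=
  1 < x < 2 /\ x ^ k - sum_f_R0 (fun i => x ^ i) (k - 1) = 0.

Definition inW2 (a b : Z) : Prop :=
  (a = (-1)%Z /\ b = 0%Z) \/ (a = 0%Z /\ b = (-1)%Z) \/ (a = 0%Z /\ b = 0%Z)
  \/ (a = 0%Z /\ b = 1%Z) \/ (a = 1%Z /\ b = 0%Z).

(* Sequences are indexed from 0: c n stands for c_{n+1}.
   c ∈ 1^k 0^(k+4) W_2^N. *)
Definition in_1k0k4W2N (k : nat) (c : nat -> Z) : Prop :=
  (forall j, (j < k)%nat -> c j = 1%Z) /\
  (forall j, (k <= j < 2 * k + 4)%nat -> c j = 0%Z) /\
  (forall m, inW2 (c (2 * k + 4 + 2 * m)%nat) (c (2 * k + 4 + 2 * m + 1)%nat)).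

(* Main.v *)
Require Import Defs.
From Stdlib Require Import Reals Lra Psatz ZArith Arith Lia.
Open Scope R_scope.

Lemma qk_eq k x : (1 <= k)%nat -> is_qk k x -> x ^ k * (2 - x) = 1.
Proof.
  intros Hk [[h1 h2] h3].
  rewrite tech3 in h3 by lra.
  replace (S (k - 1)) with k in h3 by lia.
  assert (E: x^k * (1-x) - (1 - x^k) = (x^k - (1-x^k)/(1-x))*(1-x)) by (field; lra).
  rewrite h3 in E. lra.
Qed.

Lemma qk_lb k x : (9 <= k)%nat -> 1 < x < 2 -> x ^ k * (2 - x) = 1 -> 18/10 <= x.
Proof.
  intros Hk [h1 h2] E.
  assert (H9: x^9 <= x^k) by (apply Rle_pow; lra || lia).
  assert (H9': x^9 * (2-x) <= 1) by nra.
  destruct (Rlt_or_le x (18/10)) as [Hl|]; [|lra]. exfalso.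
  set (t := x - 1) in *.
  assert (Ht: 0 < t < 8/10) by (unfold t; lra).
  replace x with (1 + t) in H9' by (unfold t; ring).
  assert (P: (1+t)^9*(2-(1+t)) - 1 = t*(8 + 27*t + 48*t^2 + 42*t^3 - 42*t^5 - 48*t^6 - 27*t^7 - 8*t^8 - t^9)) by ring.
  assert (Q: 0 < 8 + 27*t + 48*t^2 + 42*t^3 - 42*t^5 - 48*t^6 - 27*t^7 - 8*t^8 - t^9).
  { assert (p2: 0 <= t^2) by (apply pow_le; lra).
    assert (p3: t^3 <= 8/10*t^2) by (simpl; nra).
    assert (p4: t^4 <= 8/10*t^3) by (replace (t^4) with (t*t^3) by ring; apply Rmult_le_compat_r; [apply pow_le|]; lra).
    assert (p5: t^5 <= 8/10*t^4) by (replace (t^5) with (t*t^4) by ring; apply Rmult_le_compat_r; [apply pow_le|]; lra).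
    assert (p6: t^6 <= 8/10*t^5) by (replace (t^6) with (t*t^5) by ring; apply Rmult_le_compat_r; [apply pow_le|]; lra).
    assert (p7: t^7 <= 8/10*t^6) by (replace (t^7) with (t*t^6) by ring; apply Rmult_le_compat_r; [apply pow_le|]; lra).
    assert (p8: t^8 <= 8/10*t^7) by (replace (t^8) with (t*t^7) by ring; apply Rmult_le_compat_r; [apply pow_le|]; lra).
    assert (p9: t^9 <= 8/10*t^8) by (replace (t^9) with (t*t^8) by ring; apply Rmult_le_compat_r; [apply pow_le|]; lra).
    assert (0 <= t^9) by (apply pow_le; lra).
    lra. }
  nra.
Qed.

Lemma pow_dev r e n : Rabs (r - 1) <= e -> Rabs (r ^ n - 1) <= (1 + e) ^ n - 1.
Proof.
  intros H. induction n as [|n IH].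
  - simpl. rewrite Rminus_diag, Rabs_R0. lra.
  - replace (r ^ S n - 1) with (r * (r^n - 1) + (r - 1)) by (simpl; ring).
    assert (Hr: Rabs r <= 1 + e).
    { replace r with ((r - 1) + 1) by ring.
      eapply Rle_trans; [apply Rabs_triang|]. rewrite Rabs_R1. lra. }
    assert (0 <= Rabs (r^n-1)) by apply Rabs_pos.
    assert (0 <= Rabs r) by apply Rabs_pos.
    eapply Rle_trans; [apply Rabs_triang|]. rewrite Rabs_mult.
    assert (Rabs r * Rabs (r^n-1) <= (1+e) * ((1+e)^n - 1)).
    { apply Rmult_le_compat; lra. }
    simpl. lra.
Qed.

Lemma pow_abs_bound r e n : Rabs (r - 1) <= e -> Rabs (r ^ n) <= (1 + e) ^ n.
Proof.
  intros H. pose proof (pow_dev r e n H).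
  replace (r^n) with ((r^n - 1) + 1) by ring.
  eapply Rle_trans; [apply Rabs_triang|]. rewrite Rabs_R1. lra.
Qed.

Lemma bern_up e n : 0 <= e -> (1 + e) ^ n * (1 - INR n * e) <= 1.
Proof.
  intros He. induction n as [|n IH].
  - simpl. lra.
  - rewrite S_INR. assert (0 <= (1+e)^n) by (apply pow_le; lra).
    destruct (Rle_or_lt (1 - (INR n + 1) * e) 0).
    + assert (0 <= (1+e)^S n) by (apply pow_le; lra). nra.
    + assert ((1+e)*(1 - (INR n + 1)*e) <= 1 - INR n * e).
      { assert (0 <= INR n) by apply pos_INR. nra. }
      simpl. nra.
Qed.

Lemma lin_pow x n : 18/10 <= x -> (9 <= n)%nat -> 10 * INR n <= x ^ n.
Proof.
  intros Hx Hn. replace n with (9 + (n - 9))%nat by lia.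
  generalize (n - 9)%nat. intro i. induction i as [|i IH].
  - replace (9+0)%nat with 9%nat by lia.
    assert ((18/10)^9 <= x^9) by (apply pow_incr; lra).
    replace (INR 9) with 9 by (simpl; lra). simpl pow in *. lra.
  - replace (9 + S i)%nat with (S (9 + i)) by lia.
    rewrite S_INR. change (x ^ S (9+i)) with (x * x^(9+i)).
    assert (0 <= INR (9+i)) by apply pos_INR.
    assert (9 <= INR (9+i)) by (rewrite plus_INR; simpl; assert (0 <= INR i) by apply pos_INR; lra).
    assert (0 <= (x - 18/10) * x^(9+i)) by (apply Rmult_le_pos; [lra| apply pow_le; lra]).
    nra.
Qed.

Lemma Rabs_le_inv' x a : Rabs x <= a -> - a <= x <= a.
Proof. unfold Rabs; destruct (Rcase_abs x); lra. Qed.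

Definition sel (q v : R) : Z * Z :=
  if Rlt_dec ((q+1)/2) v then (1%Z, 0%Z)
  else if Rlt_dec (1/2) v then (0%Z, 1%Z)
  else if Rle_dec (-(1/2)) v then (0%Z, 0%Z)
  else if Rle_dec (-((q+1)/2)) v then (0%Z, (-1)%Z)
  else ((-1)%Z, 0%Z).

Definition pval (q : R) (p : Z * Z) : R := IZR (fst p) * q + IZR (snd p).

Lemma sel_W2 q v : inW2 (fst (sel q v)) (snd (sel q v)).
Proof.
  unfold sel, inW2.
  destruct (Rlt_dec _ _); [simpl; tauto|].
  destruct (Rlt_dec _ _); [simpl; tauto|].
  destruct (Rle_dec _ _); [simpl; tauto|].
  destruct (Rle_dec _ _); simpl; tauto.
Qed.

Lemma sel_ok q y : 17/10 <= q <= 21/10 -> Rabs y <= 3/5 ->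
  Rabs (q^2 * y - pval q (sel q (q^2 * y))) <= 3/5 /\
  Rabs (q * y - IZR (fst (sel q (q^2 * y)))) <= 3.
Proof.
  intros Hq Hy. apply Rabs_le_inv' in Hy.
  assert (Hq2: q^2 * y <= 3/5 * q^2 /\ - (3/5 * q^2) <= q^2 * y) by (simpl; nra).
  assert (0.6*q^2 - q <= 3/5) by (simpl; nra).
  assert (Hqy: Rabs (q*y) <= 21/10*(3/5)) by (apply Rabs_le; nra).
  apply Rabs_le_inv' in Hqy.
  unfold sel, pval.
  destruct (Rlt_dec _ _); [simpl fst; simpl snd; split; apply Rabs_le; lra|].
  destruct (Rlt_dec _ _); [simpl fst; simpl snd; split; apply Rabs_le; lra|].
  destruct (Rle_dec _ _); [simpl fst; simpl snd; split; apply Rabs_le; lra|].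
  destruct (Rle_dec _ _); [simpl fst; simpl snd; split; apply Rabs_le; lra|].
  simpl fst; simpl snd; split; apply Rabs_le; lra.
Qed.

Fixpoint ys (q T : R) (m : nat) : R :=
  match m with
  | O => T
  | S m' => q^2 * ys q T m' - pval q (sel q (q^2 * ys q T m'))
  end.

Lemma ys_bound q T m : 17/10 <= q <= 21/10 -> Rabs T <= 3/5 -> Rabs (ys q T m) <= 3/5.
Proof.
  intros Hq HT. induction m as [|m IH]; simpl ys; [exact HT|].
  exact (proj1 (sel_ok q _ Hq IH)).
Qed.

Definition ee (c : nat -> Z) (q : R) (N : nat) : R :=
  q ^ (N + 1) * (1 - sum_f_R0 (fun n => IZR (c n) / q ^ (n + 1)) N).

Lemma ee_succ c q N : q <> 0 -> ee c q (S N) = q * ee c q N - IZR (c (S N)).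
Proof.
  intros Hq. unfold ee.
  change (sum_f_R0 (fun n => IZR (c n) / q ^ (n + 1)) (S N)) with
    (sum_f_R0 (fun n => IZR (c n) / q ^ (n + 1)) N + IZR (c (S N)) / q ^ (S N + 1)).
  replace (S N + 1)%nat with (S (N + 1)) by lia.
  change (q ^ S (N+1)) with (q * q ^ (N+1)).
  assert (q ^ (N+1) <> 0) by (apply pow_nonzero; auto).
  field. auto.
Qed.

Lemma ee_pre1 c q k j : 1 < q -> (forall j, (j < k)%nat -> c j = 1%Z) -> (j < k)%nat ->
  ee c q j = (q ^ (j + 1) * (q - 2) + 1) / (q - 1).
Proof.
  intros Hq Hc. induction j as [|j IH]; intros Hj.
  - unfold ee. simpl sum_f_R0. rewrite Hc by lia. simpl. field. lra.
  - rewrite ee_succ by lra. rewrite IH by lia. rewrite Hc by lia.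
    replace (S j + 1)%nat with (S (j + 1)) by lia.
    change (q ^ S (j+1)) with (q * q ^ (j+1)). field. lra.
Qed.

Lemma ee_pre0 c q k i : 1 <= q -> (1 <= k)%nat ->
  (forall j, (k <= j < 2 * k + 4)%nat -> c j = 0%Z) -> (k - 1 + i < 2 * k + 4)%nat ->
  ee c q (k - 1 + i) = q ^ i * ee c q (k - 1).
Proof.
  intros Hq Hk Hc. induction i as [|i IH]; intros Hi.
  - replace (k - 1 + 0)%nat with (k - 1)%nat by lia. simpl. ring.
  - replace (k - 1 + S i)%nat with (S (k - 1 + i)) by lia.
    rewrite ee_succ by lra. rewrite IH by lia. rewrite Hc by lia. simpl. ring.
Qed.
Definition cseq (k : nat) (q T : R) (n : nat) : Z :=
  if (n <? k)%nat then 1%Z else if (n <? 2 * k + 4)%nat then 0%Z else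
  let j := (n - (2 * k + 4))%nat in
  let p := sel q (q ^ 2 * ys q T (Nat.div2 j)) in
  if Nat.even j then fst p else snd p.

Lemma cseq_even k q T m : cseq k q T (2 * k + 4 + 2 * m) = fst (sel q (q ^ 2 * ys q T m)).
Proof.
  unfold cseq.
  destruct (Nat.ltb_ge (2 * k + 4 + 2 * m) k) as [_ H1]. rewrite H1 by lia.
  destruct (Nat.ltb_ge (2 * k + 4 + 2 * m) (2*k+4)) as [_ H2]. rewrite H2 by lia.
  replace (2 * k + 4 + 2 * m - (2 * k + 4))%nat with (2 * m)%nat by lia.
  rewrite Nat.even_even, Nat.div2_double. reflexivity.
Qed.

Lemma cseq_odd k q T m : cseq k q T (2 * k + 4 + 2 * m + 1) = snd (sel q (q ^ 2 * ys q T m)).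
Proof.
  unfold cseq.
  destruct (Nat.ltb_ge (2 * k + 4 + 2 * m + 1) k) as [_ H1]. rewrite H1 by lia.
  destruct (Nat.ltb_ge (2 * k + 4 + 2 * m + 1) (2*k+4)) as [_ H2]. rewrite H2 by lia.
  replace (2 * k + 4 + 2 * m + 1 - (2 * k + 4))%nat with (2 * m + 1)%nat by lia.
  rewrite Nat.even_odd. replace (2 * m + 1)%nat with (S (2 * m)) by lia.
  rewrite Nat.div2_succ_double. reflexivity.
Qed.

Lemma cseq_in k q T : in_1k0k4W2N k (cseq k q T).
Proof.
  split; [|split].
  - intros j Hj. unfold cseq. destruct (Nat.ltb_lt j k) as [_ H]. rewrite H by lia. reflexivity.
  - intros j Hj. unfold cseq. destruct (Nat.ltb_ge j k) as [_ H]. rewrite H by lia.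
    destruct (Nat.ltb_lt j (2*k+4)) as [_ H']. rewrite H' by lia. reflexivity.
  - intros m. rewrite cseq_even, cseq_odd. apply sel_W2.
Qed.

Lemma ee_tail k q T m : 1 < q -> ee (cseq k q T) q (2 * k + 3) = T ->
  ee (cseq k q T) q (2 * k + 3 + 2 * m) = ys q T m /\
  ee (cseq k q T) q (2 * k + 3 + 2 * m + 1) = q * ys q T m - IZR (fst (sel q (q ^ 2 * ys q T m))).
Proof.
  intros Hq H0. induction m as [|m [IH1 IH2]].
  - replace (2 * k + 3 + 2 * 0)%nat with (2 * k + 3)%nat by lia. split; [exact H0|].
    replace (2 * k + 3 + 1)%nat with (S (2 * k + 3)) by lia.
    rewrite ee_succ by lra. rewrite H0. simpl ys.
    replace (S (2 * k + 3)) with (2 * k + 4 + 2 * 0)%nat by lia. rewrite cseq_even. reflexivity.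
  - assert (E1: ee (cseq k q T) q (2 * k + 3 + 2 * S m) = ys q T (S m)).
    { replace (2 * k + 3 + 2 * S m)%nat with (S (2 * k + 3 + 2 * m + 1)) by lia.
      rewrite ee_succ by lra. rewrite IH2.
      replace (S (2 * k + 3 + 2 * m + 1)) with (2 * k + 4 + 2 * m + 1)%nat by lia.
      rewrite cseq_odd. change (ys q T (S m)) with (q^2 * ys q T m - pval q (sel q (q^2*ys q T m))). unfold pval. ring. }
    split; [exact E1|].
    replace (2 * k + 3 + 2 * S m + 1)%nat with (S (2 * k + 3 + 2 * S m)) by lia.
    rewrite ee_succ by lra. rewrite E1.
    replace (S (2 * k + 3 + 2 * S m)) with (2 * k + 4 + 2 * S m)%nat by lia.
    rewrite cseq_even. reflexivity.
Qed.

Lemma ee_bound k q T N : 17/10 <= q <= 21/10 -> Rabs T <= 3/5 ->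
  ee (cseq k q T) q (2 * k + 3) = T -> (2 * k + 3 <= N)%nat ->
  Rabs (ee (cseq k q T) q N) <= 3.
Proof.
  intros Hq HT H0 HN.
  destruct (Nat.Even_or_Odd (N - (2 * k + 3))) as [[m Hm]|[m Hm]].
  - replace N with (2 * k + 3 + 2 * m)%nat by lia.
    rewrite (proj1 (ee_tail k q T m ltac:(lra) H0)).
    pose proof (ys_bound q T m Hq HT). lra.
  - replace N with (2 * k + 3 + 2 * m + 1)%nat by lia.
    rewrite (proj2 (ee_tail k q T m ltac:(lra) H0)).
    exact (proj2 (sel_ok q _ Hq (ys_bound q T m Hq HT))).
Qed.

Lemma conv k q T : 17/10 <= q <= 21/10 -> Rabs T <= 3/5 ->
  ee (cseq k q T) q (2 * k + 3) = T ->
  infinite_sum (fun n => IZR (cseq k q T n) / q ^ (n + 1)) 1.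
Proof.
  intros Hq HT H0 eps Heps.
  assert (Hi: Rabs (/ q) < 1).
  { rewrite Rabs_pos_eq by (left; apply Rinv_0_lt_compat; lra).
    rewrite <- Rinv_1. apply Rinv_lt_contravar; lra. }
  destruct (pow_lt_1_zero (/ q) Hi (eps / 3) ltac:(lra)) as [N0 HN0].
  exists (N0 + (2 * k + 3))%nat. intros n Hn.
  specialize (HN0 n ltac:(lia)).
  pose proof (ee_bound k q T n Hq HT H0 ltac:(lia)) as Hb.
  unfold ee in Hb. unfold Rdist.
  set (S := sum_f_R0 _ n) in *.
  assert (Hp: 0 < q ^ (n + 1)) by (apply pow_lt; lra).
  rewrite pow_inv in HN0. rewrite Rabs_pos_eq in HN0 by (left; apply Rinv_0_lt_compat, pow_lt; lra).
  assert (Hqn: q ^ n <= q ^ (n + 1)) by (apply Rle_pow; [lra|lia]).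
  assert (Hinv: / q ^ (n + 1) <= / q ^ n) by (apply Rinv_le_contravar; [apply pow_lt; lra| exact Hqn]).
  replace (S - 1) with (- (q ^ (n + 1) * (1 - S)) * / q ^ (n + 1)) by (field; lra).
  rewrite Rabs_mult, Rabs_Ropp, (Rabs_pos_eq (/ _)) by (left; apply Rinv_0_lt_compat; lra).
  assert (0 <= / q ^ (n+1)) by (left; apply Rinv_0_lt_compat; lra).
  assert (Rabs (q ^ (n + 1) * (1 - S)) * / q ^ (n + 1) <= 3 * / q ^ n).
  { apply Rmult_le_compat; try lra. apply Rabs_pos. }
  lra.
Qed.

Theorem lemma4p1 (k : nat) (qk q : R) :
  (9 <= k)%nat -> is_qk k qk ->
  Rabs (q - qk) <= / qk ^ (2 * k + 6) ->
  exists c : nat -> Z, in_1k0k4W2N k c /\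
    infinite_sum (fun n => IZR (c n) / q ^ (n + 1)) 1.
Proof.
  intros Hk Hqk Hd.
  pose proof (qk_eq k qk ltac:(lia) Hqk) as E.
  destruct Hqk as [[Hq1 Hq2] _].
  pose proof (qk_lb k qk Hk (conj Hq1 Hq2) E) as L.
  set (u := qk ^ k) in *.
  assert (Hu: 10 * INR k <= u) by (apply lin_pow; lia || lra).
  assert (Hk9: 9 <= INR k) by (replace 9 with (INR 9) by (simpl; lra); apply le_INR; lia).
  assert (q6: 1 <= qk ^ 6) by (apply pow_R1_Rle; lra).
  assert (q7: 1 <= qk ^ 7) by (apply pow_R1_Rle; lra).
  assert (q2: 324/100 <= qk ^ 2) by (simpl; nra).
  assert (q3: 5832/1000 <= qk ^ 3) by (simpl; nra).
  replace (qk ^ (2 * k + 6)) with (u ^ 2 * qk ^ 6) in Hd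
    by (unfold u; rewrite pow_add, <- pow_mult; f_equal; f_equal; lia).
  assert (Hu2: 8100 <= u ^ 2) by (simpl; nra).
  set (d := q - qk) in *.
  assert (Hdpos: 0 <= Rabs d) by apply Rabs_pos.
  assert (Hd1: Rabs d * (u ^ 2 * qk ^ 6) <= 1).
  { apply (Rmult_le_compat_r (u^2*qk^6)) in Hd; [|nra].
    rewrite Rinv_l in Hd by nra. exact Hd. }
  assert (Hw: 8100 <= u ^ 2 * qk ^ 6) by nra.
  assert (Hdsmall: Rabs d <= 1/8100) by nra.
  pose proof (Rabs_le_inv' _ _ Hdsmall) as Hdr.
  assert (Hq: 17/10 <= q <= 21/10) by (unfold d in Hdr; lra).
  set (T := q ^ (k + 4) * (q ^ k * (q - 2) + 1) / (q - 1)).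
  assert (HT: Rabs T <= 3/5).
  { set (rho := q / qk).
    set (eps := Rabs d / qk).
    assert (Hqr: q = rho * qk) by (unfold rho; field; lra).
    assert (Hre: Rabs (rho - 1) <= eps).
    { unfold eps, rho. replace (q / qk - 1) with (d * / qk) by (unfold d; field; lra).
      rewrite Rabs_mult, (Rabs_pos_eq (/ qk)) by (left; apply Rinv_0_lt_compat; lra).
      right; reflexivity. }
    assert (Heps0: 0 <= eps) by (unfold eps; apply Rmult_le_pos; [lra| left; apply Rinv_0_lt_compat; lra]).
    assert (Hepsq: eps * qk = Rabs d) by (unfold eps; field; lra).
    assert (Hke: INR k * eps * (u * qk ^ 7) <= 1/10).
    { replace (INR k * eps * (u * qk ^ 7)) with (INR k * (Rabs d * (u * qk^6))) by
        (rewrite <- Hepsq; simpl; ring).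
      assert (Rabs d * (u * qk ^ 6) * u <= 1) by (simpl in Hd1 |- *; nra).
      assert (0 <= Rabs d * (u * qk ^ 6)) by (apply Rmult_le_pos; [lra|nra]).
      nra. }
    assert (Hke2: INR k * eps <= 1/900).
    { assert (0 <= INR k * eps) by (apply Rmult_le_pos; lra).
      assert (900 <= u * qk ^ 7) by nra. nra. }
    set (A := (1 + eps) ^ (2 * k + 4)).
    set (B := (1 + eps) ^ k).
    assert (HA: A <= 101/100).
    { pose proof (bern_up eps (2 * k + 4) Heps0) as HB. fold A in HB.
      rewrite plus_INR, mult_INR in HB.
      replace (INR 2) with 2 in HB by (simpl; lra). replace (INR 4) with 4 in HB by (simpl; lra).
      assert (Hs: (2 * INR k + 4) * eps <= 1/100) by nra.
      assert (0 <= A) by (apply pow_le; lra).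
      assert (0 <= A * (1/100 - (2 * INR k + 4) * eps)) by (apply Rmult_le_pos; lra).
      nra. }
    assert (HBA: B <= A) by (apply Rle_pow; [lra|lia]).
    assert (HB1: 1 <= B) by (apply pow_R1_Rle; lra).
    assert (HBm: B - 1 <= INR k * eps * A).
    { pose proof (bern_up eps k Heps0) as HB. fold B in HB.
      assert (0 <= INR k * eps) by (apply Rmult_le_pos; lra). nra. }
    assert (Hr1: Rabs (rho ^ (k + 4)) <= A).
    { eapply Rle_trans; [apply pow_abs_bound; exact Hre|]. apply Rle_pow; [lra|lia]. }
    assert (Hr2: Rabs (rho ^ (2 * k + 4)) <= A) by (apply pow_abs_bound; exact Hre).
    assert (Hr3: Rabs (1 - rho ^ k) <= B - 1).
    { rewrite <- Rabs_Ropp. replace (- (1 - rho ^ k)) with (rho ^ k - 1) by ring.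
      apply pow_dev; exact Hre. }
    assert (Tq: T * (q - 1) = rho ^ (k + 4) * (qk ^ 4 * u) * (1 - rho ^ k)
                            + rho ^ (2 * k + 4) * (qk ^ 4 * u ^ 2) * d).
    { assert (e1: q ^ (k + 4) = rho ^ (k + 4) * (u * qk ^ 4))
        by (transitivity ((rho*qk)^(k+4)); [rewrite <- Hqr; reflexivity| rewrite Rpow_mult_distr, (pow_add qk); reflexivity]).
      assert (e2: q ^ k = rho ^ k * u) by (transitivity ((rho*qk)^k); [rewrite <- Hqr; reflexivity| rewrite Rpow_mult_distr; reflexivity]).
      assert (e3: rho ^ (2 * k + 4) = rho ^ (k + 4) * rho ^ k)
        by (rewrite <- pow_add; f_equal; lia).
      unfold T. rewrite e3.
      replace (q ^ (k + 4) * (q ^ k * (q - 2) + 1) / (q - 1) * (q - 1))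
        with (q ^ (k + 4) * (q ^ k * (q - 2) + 1)) by (field; lra).
      rewrite e1, e2. unfold d.
      transitivity (rho ^ (k + 4) * (qk ^ 4 * u) * (1 - rho ^ k) + rho ^ (k + 4) * rho ^ k * (qk ^ 4 * u ^ 2) * (q - qk)
                    + rho ^ (k + 4) * rho ^ k * u * qk ^ 4 * (1 - u * (2 - qk))); [ring|].
      rewrite E. ring. }
    assert (X1: 0 <= qk ^ 4 * u) by (apply Rmult_le_pos; [apply pow_le|unfold u; apply pow_le]; lra).
    assert (X2: Rabs d * (qk ^ 4 * u ^ 2) <= / qk ^ 2).
    { replace (Rabs d * (qk ^ 4 * u ^ 2)) with (Rabs d * (u ^ 2 * qk ^ 6) * / qk ^ 2)
        by (field; lra).
      rewrite <- (Rmult_1_l (/ qk ^ 2)) at 2.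
      apply Rmult_le_compat_r; [left; apply Rinv_0_lt_compat; apply pow_lt; lra| exact Hd1]. }
    assert (i2: / qk ^ 2 <= 100/324).
    { replace (100/324) with (/ (324/100)) by field. apply Rinv_le_contravar; lra. }
    assert (X3: qk ^ 4 * u * (INR k * eps) <= 1/58).
    { assert (qk ^ 3 * (qk ^ 4 * u * (INR k * eps)) = INR k * eps * (u * qk ^ 7)) by (simpl; ring).
      assert (0 <= qk ^ 4 * u * (INR k * eps)) by (apply Rmult_le_pos; [lra| apply Rmult_le_pos; lra]).
      nra. }
    assert (Y1: qk ^ 4 * u * (B - 1) <= A / 58).
    { assert (qk ^ 4 * u * (B - 1) <= qk ^ 4 * u * (INR k * eps * A)) by (apply Rmult_le_compat_l; lra).
      assert (0 <= A) by lra. nra. }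
    assert (Habs: Rabs (T * (q - 1)) <= A * (A / 58) + A * (100/324)).
    { rewrite Tq. eapply Rle_trans; [apply Rabs_triang|].
      rewrite (Rabs_mult (rho ^ (k+4) * (qk^4*u)) (1 - rho^k)), (Rabs_mult (rho^(k+4)) (qk^4*u)), (Rabs_mult (rho^(2*k+4) * (qk^4*u^2)) d), (Rabs_mult (rho^(2*k+4)) (qk^4*u^2)).
      rewrite (Rabs_pos_eq (qk ^ 4 * u)) by lra.
      rewrite (Rabs_pos_eq (qk ^ 4 * u ^ 2)) by (apply Rmult_le_pos; [apply pow_le; lra| apply pow_le; unfold u; apply pow_le; lra]).
      assert (0 <= Rabs (1 - rho ^ k)) by apply Rabs_pos.
      assert (0 <= Rabs (rho ^ (k + 4))) by apply Rabs_pos.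
      assert (0 <= Rabs (rho ^ (2 * k + 4))) by apply Rabs_pos.
      assert (Z1: qk ^ 4 * u * Rabs (1 - rho ^ k) <= A / 58).
      { eapply Rle_trans; [|exact Y1]. apply Rmult_le_compat_l; lra. }
      assert (Z2: qk ^ 4 * u ^ 2 * Rabs d <= 100/324) by (rewrite Rmult_comm; eapply Rle_trans; [exact X2|exact i2]).
      assert (0 <= qk ^ 4 * u * Rabs (1 - rho ^ k)) by (apply Rmult_le_pos; lra).
      assert (0 <= qk ^ 4 * u ^ 2 * Rabs d) by (apply Rmult_le_pos; [apply Rmult_le_pos; [apply pow_le; lra| apply pow2_ge_0]|lra]).
      assert (Rabs (rho ^ (k + 4)) * (qk ^ 4 * u * Rabs (1 - rho ^ k)) <= A * (A / 58))
        by (apply Rmult_le_compat; lra).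
      assert (Rabs (rho ^ (2 * k + 4)) * (qk ^ 4 * u ^ 2 * Rabs d) <= A * (100/324))
        by (apply Rmult_le_compat; lra).
      nra. }
    rewrite Rabs_mult, (Rabs_pos_eq (q - 1)) in Habs by lra.
    assert (0 <= A) by lra.
    assert (A * (A / 58) + A * (100/324) <= 35/100) by nra.
    assert (0 <= Rabs T) by apply Rabs_pos.
    nra. }
  exists (cseq k q T). split; [apply cseq_in|].
  apply conv; [exact Hq | exact HT|].
  assert (HP := cseq_in k q T). destruct HP as [P1 [P2 _]].
  replace (2 * k + 3)%nat with (k - 1 + (k + 4))%nat by lia.
  rewrite ee_pre0 by (lra || lia || auto).
  rewrite (ee_pre1 _ q k) by (lra || lia || auto).
  replace (k - 1 + 1)%nat with k by lia.
  unfold T. field. lra.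
Qed.
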